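(* For all $p,\alpha\in(0,1)$ there exists $\varepsilon_0>0$ such that for every $0<\varepsilon\le\varepsilon_0$ there exists $n_0$ such that the following holds. Suppose $G$ is a graph on $n\ge n_0$ vertices in which every vertex has even degree, $G$ is lower-$(p,\varepsilon)$-regular and $\delta(G)\ge\alpha n$. Then there is an orientation $G'$ of $G$ such that $G'$ is Eulerian (i.e. $d^+_{G'}(v)=d^-_{G'}(v)$ for all $v$) and lower-$(p/4,\varepsilon)$-regular.
   Context: For $0<\varepsilon,p<1$, a graph (resp. digraph) $G$ on $n$ vertices is lower-$(p,\varepsilon)$-regular if $e_G(S,T)\ge(p-\varepsilon)|S||T|$ for all disjoint $S,T\subseteq V(G)$ with $|S|,|T|\ge\varepsilon n$, where $e_G(S,T)$ counts edges between $S$ and $T$ (resp. directed from $S$ to $T$). *)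

(* Defs.v *)
From HB Require Import structures.
From mathcomp Require Import all_boot all_order all_algebra.
From mathcomp Require Import reals.
Set Implicit Arguments. Unset Strict Implicit. Unset Printing Implicit Defensive.
Import Order.TTheory GRing.Theory Num.Theory.
Local Open Scope ring_scope.

Definition simple_graph n (G : rel 'I_n) : Prop :=
  (forall x y, G x y = G y x) /\ (forall x, ~~ G x x).

(* e_G(S,T): number of pairs (x,y) in S x T with G x y
   (edges between S and T for a graph; directed from S to T for a digraph) *)
Definition e_rel n (G : rel 'I_n) (S T : {set 'I_n}) : nat :=
  #|[set xy in setX S T | G xy.1 xy.2]|.

Definition lower_regular (R : realType) n (G : rel 'I_n) (p eps : R) : Prop :=
  forall S T : {set 'I_n}, [disjoint S & T] ->
    eps * n%:R <= #|S|%:R -> eps * n%:R <= #|T|%:R ->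
    (p - eps) * #|S|%:R * #|T|%:R <= (e_rel G S T)%:R.

Definition deg n (G : rel 'I_n) (v : 'I_n) : nat := #|[set y | G v y]|.
Definition outdeg n (D : rel 'I_n) (v : 'I_n) : nat := #|[set y | D v y]|.
Definition indeg n (D : rel 'I_n) (v : 'I_n) : nat := #|[set y | D y v]|.

Definition orientation n (G D : rel 'I_n) : Prop :=
  (forall x y, G x y = D x y || D y x) /\ (forall x y, ~~ (D x y && D y x)).

Definition eulerian n (D : rel 'I_n) : Prop := forall v, outdeg D v = indeg D v.

(* Main.v *)
Require Import Defs.
From HB Require Import structures.
From mathcomp Require Import all_boot all_order all_algebra.
From mathcomp Require Import reals.
From mathcomp Require Import zify ring lra.
Set Implicit Arguments. Unset Strict Implicit. Unset Printing Implicit Defensive.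
Import Order.TTheory GRing.Theory Num.Theory.

Lemma card_sum (T : finType) (P : pred T) : #|[set y | P y]| = \sum_y (P y : nat).
Proof.
rewrite -sum1_card big_mkcond /=; apply: eq_bigr => y _; by rewrite inE; case: (P y).
Qed.

Section Arcs.
Variable n : nat.
Local Notation V := 'I_n.

Definition addarcs (D : rel V) (l : seq (V * V)) : rel V :=
  fun x y => D x y || ((x, y) \in l).

Definition swapl (l : seq (V * V)) := [seq (e.2, e.1) | e <- l].

Lemma addarcs_cons D e l : addarcs D (e :: l) =2
  fun x y => addarcs D l x y || ((x == e.1) && (y == e.2)).
Proof.
move=> x y; rewrite /addarcs in_cons; case: e => a b /=.
by rewrite xpair_eqE; case: (D x y); case: (_ \in l); case: (_ && _).
Qed.

Lemma outdeg_eq (D1 D2 : rel V) x : D1 =2 D2 -> outdeg D1 x = outdeg D2 x.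
Proof. by move=> E; rewrite /outdeg; apply: eq_card => y; rewrite !inE E. Qed.
Lemma indeg_eq (D1 D2 : rel V) x : D1 =2 D2 -> indeg D1 x = indeg D2 x.
Proof. by move=> E; rewrite /indeg; apply: eq_card => y; rewrite !inE E. Qed.
Lemma e_rel_eq (D1 D2 : rel V) S T : D1 =2 D2 -> e_rel D1 S T = e_rel D2 S T.
Proof. by move=> E; rewrite /e_rel; apply: eq_card => y; rewrite !inE E. Qed.

Lemma outdeg_add1 (D : rel V) a b x : ~~ D a b ->
  outdeg (fun x y => D x y || ((x == a) && (y == b))) x = outdeg D x + (x == a).
Proof.
move=> nD; rewrite /outdeg; case: (eqVneq x a) => [->|xa] /=.
  rewrite (_ : [set y | _] = b |: [set y | D a y]); last first.
    by apply/setP => y; rewrite !inE orbC.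
  by rewrite (cardsU1 b [set y | D a y]) inE (negbTE nD) addnC.
apply: (etrans _ (esym (addn0 _))); apply: eq_card => y; rewrite !inE.
by rewrite orbF.
Qed.

Lemma indeg_add1 (D : rel V) a b x : ~~ D a b ->
  indeg (fun x y => D x y || ((x == a) && (y == b))) x = indeg D x + (x == b).
Proof.
move=> nD; rewrite /indeg; case: (eqVneq x b) => [->|xb] /=.
  rewrite (_ : [set y | _] = a |: [set y | D y b]); last first.
    by apply/setP => y; rewrite !inE andbT orbC.
  by rewrite (cardsU1 a [set y | D y b]) inE (negbTE nD) addnC.
apply: (etrans _ (esym (addn0 _))); apply: eq_card => y; rewrite !inE.
by rewrite andbF orbF.
Qed.

Lemma e_rel_add1 (D : rel V) a b S T : ~~ D a b ->
  e_rel (fun x y => D x y || ((x == a) && (y == b))) S T =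
  e_rel D S T + ((a \in S) && (b \in T)).
Proof.
move=> nD; rewrite /e_rel.
case abST: ((a \in S) && (b \in T)).
  rewrite (_ : [set xy in _ | _] = (a, b) |: [set xy in setX S T | D xy.1 xy.2]).
    by rewrite (cardsU1 (a, b) [set xy in setX S T | D xy.1 xy.2]) !inE /= (negbTE nD) andbF addnC.
  apply/setP => [[x y]]; rewrite !inE /= xpair_eqE.
  case: (eqVneq x a) => [->|]; case: (eqVneq y b) => [->|] /=; rewrite ?abST ?orbT ?orbF //.
apply: (etrans _ (esym (addn0 _))); apply: eq_card => [[x y]]; rewrite !inE /=.
case: (eqVneq x a) => [->|]; case: (eqVneq y b) => [->|] //=; rewrite ?andbF ?orbF //.
by rewrite abST.
Qed.

Lemma addarcs_deg (D : rel V) l x S T : uniq l -> (forall e, e \in l -> ~~ D e.1 e.2) ->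
  [/\ outdeg (addarcs D l) x = outdeg D x + count (fun e => e.1 == x) l,
      indeg (addarcs D l) x = indeg D x + count (fun e => e.2 == x) l &
      e_rel (addarcs D l) S T = e_rel D S T + count (fun e => (e.1 \in S) && (e.2 \in T)) l].
Proof.
elim: l => [|e l IH] /=.
  by move=> _ _; rewrite !addn0; split; [apply: outdeg_eq|apply: indeg_eq|apply: e_rel_eq];
    move=> ? ?; rewrite /addarcs in_nil orbF.
case/andP=> el ul nD.
have nD' : forall e', e' \in l -> ~~ D e'.1 e'.2 by move=> e' h; apply: nD; rewrite in_cons h orbT.
have [o i r] := IH ul nD'.
have pre : ~~ addarcs D l e.1 e.2.
  by rewrite /addarcs negb_or nD ?in_cons ?eqxx //= -surjective_pairing.
split.
- rewrite (outdeg_eq _ (addarcs_cons D e l)) outdeg_add1 // o -addnA; congr (_ + _).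
  by rewrite addnC eq_sym.
- rewrite (indeg_eq _ (addarcs_cons D e l)) indeg_add1 // i -addnA; congr (_ + _).
  by rewrite addnC eq_sym.
- rewrite (e_rel_eq _ _ (addarcs_cons D e l)) e_rel_add1 // r -addnA; congr (_ + _).
  by rewrite addnC.
Qed.


Lemma addarcs_erel (D : rel V) l S T : uniq l -> (forall e, e \in l -> ~~ D e.1 e.2) ->
  e_rel (addarcs D l) S T = e_rel D S T + count (fun e => (e.1 \in S) && (e.2 \in T)) l.
Proof.
elim: l => [|e l IH] /=.
  by move=> _ _; rewrite addn0; apply: e_rel_eq => ? ?; rewrite /addarcs in_nil orbF.
case/andP=> el ul nD.
have nD' : forall e', e' \in l -> ~~ D e'.1 e'.2 by move=> e' h; apply: nD; rewrite in_cons h orbT.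
have pre : ~~ addarcs D l e.1 e.2.
  by rewrite /addarcs negb_or nD ?in_cons ?eqxx //= -surjective_pairing.
rewrite (e_rel_eq _ _ (addarcs_cons D e l)) e_rel_add1 // IH // -addnA; congr (_ + _).
by rewrite addnC.
Qed.

Lemma mem_swapl l x y : ((x, y) \in swapl l) = ((y, x) \in l).
Proof.
elim: l => [|[a b] l IH] //=; by rewrite !in_cons IH !xpair_eqE andbC.
Qed.

Lemma swaplK l : swapl (swapl l) = l.
Proof. by elim: l => [|[a b] l IH] //=; rewrite IH. Qed.

Lemma count_swapl (P : V -> bool) l :
  count (fun e => P e.1) (swapl l) = count (fun e => P e.2) l.
Proof. by elim: l => [|[a b] l IH] //=; rewrite IH. Qed.

Lemma uniq_anti l x y : uniq (l ++ swapl l) -> (x, y) \in l -> (y, x) \in l -> False.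
Proof.
rewrite cat_uniq => /and3P[_ /hasP nh _] xy yx.
by apply: nh; exists (x, y) => //; rewrite mem_swapl.
Qed.

Lemma orient_add (H D : rel V) l : (forall x y, H x y = H y x) ->
  orientation H D -> uniq (l ++ swapl l) ->
  (forall e, e \in l ++ swapl l -> ~~ H e.1 e.2) ->
  orientation (addarcs H (l ++ swapl l)) (addarcs D l).
Proof.
move=> Hs [HD Ha] ul nH; split.
  move=> x y; rewrite /addarcs mem_cat mem_swapl HD.
  by case: (D x y); case: (D y x); case: (_ \in l); case: (_ \in l).
move=> x y; rewrite /addarcs.
have nl : forall x y, (x, y) \in l -> ~~ H x y.
  by move=> x' y' h; apply: (nH (x', y')); rewrite mem_cat h.
have nl' : forall x y, (x, y) \in l -> ~~ H y x.
  by move=> x' y' h; apply: (nH (y', x')); rewrite mem_cat mem_swapl h orbT.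
have DH : forall x y, D x y -> H x y by move=> x' y' h; rewrite HD h.
case Dxy: (D x y); case Dyx: (D y x) => //=; rewrite ?andbT.
- by have := Ha x y; rewrite Dxy Dyx.
- by apply/negP => h; have := nl' _ _ h; rewrite DH.
- by apply/negP => h; have := nl' _ _ h; rewrite DH.
- by apply/negP => /andP[h1 h2]; apply: (uniq_anti ul h1 h2).
Qed.

Definition eulerian_add (D : rel V) l : eulerian D -> uniq l ->
  (forall e, e \in l -> ~~ D e.1 e.2) ->
  (forall x, count (fun e => e.1 == x) l = count (fun e => e.2 == x) l) ->
  eulerian (addarcs D l).
Proof.
move=> E ul nD C x.
have [o i _] := addarcs_deg x set0 set0 ul nD.
by rewrite o i E C.
Qed.

Lemma orient_not (H D : rel V) x y : orientation H D -> ~~ H x y -> ~~ D x y.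
Proof. by case=> HD _; rewrite HD negb_or => /andP[]. Qed.


Definition symr (H : rel V) := forall x y, H x y = H y x.
Definition irrr (H : rel V) := forall x, ~~ H x x.
Definition evenr (H : rel V) := forall v, ~~ odd (deg H v).
Definition closedl (l : seq (V * V)) :=
  forall x, count (fun e => e.1 == x) l = count (fun e => e.2 == x) l.
Definition inST (S T : {set V}) (e : V * V) := (e.1 \in S) && (e.2 \in T).

Lemma addarcs_perm (H : rel V) l1 l2 : l1 =i l2 -> addarcs H l1 =2 addarcs H l2.
Proof. by move=> E x y; rewrite /addarcs E. Qed.

Lemma orient_eq (H1 H2 D : rel V) : H1 =2 H2 -> orientation H2 D -> orientation H1 D.
Proof. by move=> E [h1 h2]; split => // x y; rewrite E h1. Qed.

Lemma orient_eqD (H D1 D2 : rel V) : D1 =2 D2 -> orientation H D2 -> orientation H D1.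
Proof. by move=> E [h1 h2]; split => x y; rewrite !E ?h1 ?h2. Qed.

Lemma eulerian_eq (D1 D2 : rel V) : D1 =2 D2 -> eulerian D2 -> eulerian D1.
Proof. by move=> E h x; rewrite (outdeg_eq _ E) (indeg_eq _ E). Qed.

Lemma split_off (H : rel V) l : symr H -> irrr H -> evenr H ->
  uniq (l ++ swapl l) -> closedl l -> (forall e, e \in l -> H e.1 e.2) ->
  let H' := fun x y => H x y && ~~ ((x, y) \in l ++ swapl l) in
  [/\ symr H', irrr H', evenr H', H =2 addarcs H' (l ++ swapl l) &
      forall S T, e_rel H S T = e_rel H' S T + count (inST S T) (l ++ swapl l)].
Proof.
move=> Hs Hi He ul cl Hl H'.
have HL : forall x y, (x, y) \in l ++ swapl l -> H x y.
  move=> x y; rewrite mem_cat mem_swapl => /orP[] h.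
    exact: (Hl (x, y)).
  by rewrite Hs; apply: (Hl (y, x)).
have E : H =2 addarcs H' (l ++ swapl l).
  move=> x y; rewrite /addarcs /H'; case h: (_ \in _); last by rewrite andbT orbF.
  by rewrite orbT HL.
have nH' : forall e, e \in l ++ swapl l -> ~~ H' e.1 e.2.
  by move=> [x y] /= h; rewrite /H' h andbF.
have sH' : symr H'.
  move=> x y; rewrite /H' Hs !mem_cat !mem_swapl; congr (_ && ~~ _); exact: orbC.
split => //.
- by move=> x; rewrite /H' negb_and Hi.
- move=> v; have [o _ _] := addarcs_deg v set0 set0 ul nH'.
  have := He v; rewrite /deg -/(outdeg H v) (outdeg_eq _ E) o.
  rewrite count_cat (count_swapl (fun z => z == v)) -cl addnn oddD odd_double addbF.
  by rewrite /outdeg.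
- by move=> S T; rewrite (e_rel_eq _ _ E) addarcs_erel.
Qed.


Lemma lift_path (H0 D2 : rel V) a b c : symr H0 ->
  orientation (addarcs H0 [:: (a, b); (b, a)]) D2 -> eulerian D2 -> D2 a b ->
  uniq ([:: (a, c); (c, b)] ++ swapl [:: (a, c); (c, b)]) ->
  (forall e, e \in [:: (a, c); (c, b)] ++ swapl [:: (a, c); (c, b)] -> ~~ H0 e.1 e.2) ->
  ~~ H0 a b ->
  exists D, orientation (addarcs H0 ([:: (a, c); (c, b)] ++ swapl [:: (a, c); (c, b)])) D
            /\ eulerian D.
Proof.
move=> Hs [HD Ha] E Dab ul nH nab.
pose D0 := fun x y => D2 x y && ~~ ((x == a) && (y == b)).
have nba : ~~ D2 b a by have := Ha a b; rewrite Dab.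
have O0 : orientation H0 D0.
  split; last first.
    by move=> x y; rewrite /D0; apply/negP => /andP[/andP[h1 _] /andP[h2 _]];
      have := Ha x y; rewrite h1 h2.
  move=> x y; have := HD x y; rewrite /addarcs /D0 !inE.
  rewrite -[(y == a) && (x == b)]xpair_eqE -[(x == a) && (y == b)]xpair_eqE.
  case: (eqVneq (x, y) (a, b)) => [[-> ->]|ne1].
    by rewrite (negbTE nab) (negbTE nba) Dab.
  case: (eqVneq (x, y) (b, a)) => [[-> ->]|ne2].
    by rewrite Hs (negbTE nab) (negbTE nba) Dab eqxx.
  rewrite !orbF andbT => ->; congr (_ || _).
  by rewrite (_ : (y, x) != (a, b)) ?andbT //; apply: contra ne2 => /eqP[-> ->].
have E2 : D2 =2 addarcs D0 [:: (a, b)].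
  move=> x y; rewrite /addarcs /D0 !inE -xpair_eqE.
  case: (eqVneq (x, y) (a, b)) => [[-> ->]|ne]; first by rewrite Dab orbT.
  by rewrite andbT orbF.
have nD0ab : ~~ D0 a b by rewrite /D0 !eqxx andbF.
have ul1 : uniq [:: (a, b)] by [].
have n1 : forall e, e \in [:: (a, b)] -> ~~ D0 e.1 e.2 by move=> e; rewrite inE => /eqP->.
have ul2 : uniq [:: (a, c); (c, b)] by move: ul; rewrite cat_uniq => /andP[].
have n2 : forall e, e \in [:: (a, c); (c, b)] -> ~~ D0 e.1 e.2.
  by move=> e h; apply: (orient_not O0); apply: nH; rewrite mem_cat h.
exists (addarcs D0 [:: (a, c); (c, b)]); split.
  by apply: orient_add.
move=> x; have [o i _] := addarcs_deg x set0 set0 ul2 n2.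
have [o' i' _] := addarcs_deg x set0 set0 ul1 n1.
have := E x; rewrite (outdeg_eq _ E2) (indeg_eq _ E2) o' i' o i /= => h.
lia.
Qed.


Lemma remove_eq (H : rel V) L : (forall x y, (x, y) \in L -> H x y) ->
  H =2 addarcs (fun x y => H x y && ~~ ((x, y) \in L)) L.
Proof.
move=> HL x y; rewrite /addarcs; case h: (_ \in _); last by rewrite andbT orbF.
by rewrite orbT HL.
Qed.

Lemma sym_addarcs (H : rel V) l : symr H -> symr (addarcs H (l ++ swapl l)).
Proof. by move=> Hs x y; rewrite /addarcs !mem_cat !mem_swapl Hs; congr (_ || _); exact: orbC. Qed.

Lemma sym_remove (H : rel V) l : symr H ->
  symr (fun x y => H x y && ~~ ((x, y) \in l ++ swapl l)).
Proof. by move=> Hs x y; rewrite !mem_cat !mem_swapl Hs; congr (_ && ~~ _); exact: orbC. Qed.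

Lemma no_edge_euler (H : rel V) : (forall x y, ~~ H x y) ->
  exists D, orientation H D /\ eulerian D.
Proof.
move=> nH; exists (fun _ _ => false); split.
  by split => // x y; rewrite (negbTE (nH x y)).
move=> x; rewrite /outdeg /indeg; apply: eq_card => y; by rewrite !inE.
Qed.

Lemma perm_closed (l : seq (V * V)) : perm_eq [seq e.1 | e <- l] [seq e.2 | e <- l] -> closedl l.
Proof.
move=> /permP P x; have := P (pred1 x); rewrite !count_map.
by under eq_count do rewrite /= eq_sym; move=> ->; apply: eq_count => e /=; rewrite eq_sym.
Qed.

Lemma par_aux (a u v w : nat) :
  (a + (u + (v + (v + (w + 0)))) = a + (u + (w + 0)) + v.*2)%N.
Proof. rewrite -addnn; lia. Qed.

Lemma euler_exists k : forall H : rel V, e_rel H setT setT <= k -> symr H -> irrr H ->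
  evenr H -> exists D, orientation H D /\ eulerian D.
Proof.
elim: k => [|k IH] H hk Hs Hi He;
  (case: (pickP (fun xy : V * V => H xy.1 xy.2)) => [[v u] /= Hvu | none];
   last by apply: no_edge_euler => x y; have := none (x, y); rewrite /= => ->).
  suff : 0 < e_rel H setT setT by rewrite lt0n; move: hk; rewrite leqn0 => ->.
  by apply/card_gt0P; exists (v, u); rewrite !inE.
have uA : u \in [set y | H v y] by rewrite inE.
have := He v; rewrite /deg (cardsD1 u) uA /= => odd1.
have /card_gt0P[w] : 0 < #|[set y | H v y] :\ u|.
  by rewrite lt0n; apply: contra odd1 => /eqP ->.
rewrite !inE => /andP[wu Hvw].
have vu : v != u by apply: contraNneq (Hi v) => e; rewrite {2}e.
have vw : v != w by apply: contraNneq (Hi v) => e; rewrite {2}e.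
have uv : u != v by rewrite eq_sym.
have wv : w != v by rewrite eq_sym.
have uw : u != w by rewrite eq_sym.
have uv' := negbTE uv; have vu' := negbTE vu; have uw' := negbTE uw.
have wu' := negbTE wu; have vw' := negbTE vw; have wv' := negbTE wv.
case Huw: (H u w).
  pose l := [:: (u, v); (v, w); (w, u)].
  have ul : uniq (l ++ swapl l).
    by rewrite /= !inE !xpair_eqE uv' vu' uw' wu' vw' wv' /= ?andbF.
  have cl : closedl l.
    apply: perm_closed; rewrite perm_sym; change (perm_eq (rot 1 [:: u; v; w]) [:: u; v; w]); by rewrite perm_rot.
  have Hl : forall e, e \in l -> H e.1 e.2.
    by move=> e; rewrite !inE => /or3P[] /eqP->; rewrite /= // Hs.
  have [s' i' e' E r] := split_off Hs Hi He ul cl Hl.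
  have [D' [O' E']] : exists D, orientation
       (fun x y => H x y && ~~ ((x, y) \in l ++ swapl l)) D /\ eulerian D.
    apply: IH => //; move: hk; rewrite r /inST /= !inE /=; set m := e_rel _ _ _; move=> h; clear -h; lia.
  exists (addarcs D' l); split.
    apply: orient_eq E _; apply: orient_add => //.
    by move=> [x y] /= ->; rewrite andbF.
  apply: eulerian_add => //; first by move: ul; rewrite cat_uniq => /andP[].
  move=> [x y] h /=; apply: (orient_not O'); by rewrite negb_and negbK mem_cat h orbT.
pose l0 := [:: (u, v); (v, w)].
pose L0 := l0 ++ swapl l0.
pose H0 := fun x y => H x y && ~~ ((x, y) \in L0).
have HL0 : forall x y, (x, y) \in L0 -> H x y.
  move=> x y; rewrite !inE !xpair_eqE.
  by case/or4P => /andP[/eqP-> /eqP->] //; rewrite Hs.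
have E0 : H =2 addarcs H0 L0 := remove_eq HL0.
have ul0 : uniq L0 by rewrite /L0 /= !inE !xpair_eqE uv' vu' uw' wu' vw' wv' /= ?andbF.
have nH0 : forall e, e \in L0 -> ~~ H0 e.1 e.2.
  by move=> [x y] /= h; rewrite /H0 h andbF.
have nH0uw : ~~ H0 u w by rewrite /H0 Huw.
have nH0wu : ~~ H0 w u by rewrite /H0 Hs Huw.
pose H2 := addarcs H0 ([:: (u, w)] ++ swapl [:: (u, w)]).
have ul2 : uniq ([:: (u, w)] ++ swapl [:: (u, w)]) by rewrite /= !inE xpair_eqE uw' wu'.
have nH2 : forall e, e \in [:: (u, w)] ++ swapl [:: (u, w)] -> ~~ H0 e.1 e.2.
  by move=> e; rewrite !inE => /orP[] /eqP->.
have s0 : symr H0 := sym_remove l0 Hs.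
have [D2 [O2 E2]] : exists D, orientation H2 D /\ eulerian D.
  apply: IH.
  - move: hk; rewrite (e_rel_eq _ _ E0) /H2 !addarcs_erel // /inST /= !inE /=.
    set m := e_rel _ _ _; move=> h; clear -h; lia.
  - exact: sym_addarcs.
  - move=> x; apply/negP; rewrite /H2 /addarcs /H0 => /orP[/andP[h _]|].
      by rewrite (negbTE (Hi x)) in h.
    rewrite !inE !xpair_eqE /= => /orP[] /andP[/eqP e1 /eqP e2].
      by move: uw; rewrite -e1 -e2 eqxx.
    by move: uw; rewrite -e1 -e2 eqxx.
  - move=> x; have := He x.
    have [o _ _] := addarcs_deg x set0 set0 ul0 nH0.
    have [o2 _ _] := addarcs_deg x set0 set0 ul2 nH2.
    rewrite /deg -/(outdeg H x) -/(outdeg H2 x) (outdeg_eq _ E0) o o2 /=.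
    by rewrite par_aux oddD odd_double addbF.
have Puw : H2 u w by rewrite /H2 /addarcs !inE eqxx orbT.
have [O2H O2a] := O2.
have /orP[Dd|Dd] : D2 u w || D2 w u by rewrite -O2H.
  have [D [OD ED]] := lift_path s0 O2 E2 Dd ul0 nH0 nH0uw.
  by exists D; split => //; apply: orient_eq E0 OD.
have Lp : [:: (w, v); (v, u)] ++ swapl [:: (w, v); (v, u)] =i L0.
  by move=> e; rewrite !inE; do ![case: (_ == _) => //].
have O2' : orientation (addarcs H0 [:: (w, u); (u, w)]) D2.
  apply: orient_eq O2 => x y; rewrite /H2 /addarcs /= !inE; congr (_ || _); exact: orbC.
have ul0' : uniq ([:: (w, v); (v, u)] ++ swapl [:: (w, v); (v, u)]).
  by rewrite /= !inE !xpair_eqE uv' vu' uw' wu' vw' wv' /= ?andbF.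
have nH0' : forall e, e \in [:: (w, v); (v, u)] ++ swapl [:: (w, v); (v, u)] -> ~~ H0 e.1 e.2.
  by move=> e; rewrite Lp; apply: nH0.
have [D [OD ED]] := lift_path s0 O2' E2 Dd ul0' nH0' nH0wu.
exists D; split => //; apply: orient_eq OD => x y.
by rewrite E0; apply: addarcs_perm => e; rewrite Lp.
Qed.


Lemma erel_sum (H : rel V) : e_rel H setT setT = \sum_x deg H x.
Proof.
rewrite /e_rel (_ : [set xy in _ | _] = [set xy | H xy.1 xy.2]); last first.
  by apply/setP => xy; rewrite !inE.
rewrite card_sum -(pair_bigA _ (fun x y => (H x y : nat))) /=.
by apply: eq_bigr => x _; rewrite /deg card_sum.
Qed.

Lemma kst (H : rel V) : symr H ->
  (forall a b x y, a != b -> x != y -> H a x -> H b x -> H a y -> H b y -> False) ->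
  (e_rel H setT setT * e_rel H setT setT <= n * n * n + n * e_rel H setT setT)%N.
Proof.
move=> Hs C4.
have hd : forall x, deg H x = \sum_y (H x y : nat) by move=> x; rewrite /deg card_sum.
rewrite erel_sum.
set m := \sum_x deg H x.
have sq : forall x, deg H x * deg H x =
    \sum_y \sum_z ((H x y && H x z && (y != z)) : nat) + deg H x.
  move=> x; rewrite {1 2}hd big_distrlr /= hd -big_split /=.
  apply: eq_bigr => y _.
  rewrite (eq_bigr (fun z => ((H x y && H x z && (y != z)) : nat) + ((z == y) && H x y)));
    last first.
    move=> z _; case: (eqVneq z y) => [->|zy]; rewrite ?eqxx ?andbF ?andbT /=.
      by case: (H x y).
    by case: (H x y); case: (H x z).
  rewrite big_split /=; congr (_ + _).
  rewrite (bigD1 y) //= eqxx big1 ?addn0 // => z /negbTE -> //.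
have cf : forall y z, y != z -> \sum_x ((H x y && H x z) : nat) <= 1.
  move=> y z yz; rewrite -card_sum leqNgt; apply/negP => /card_gt1P[a [b []]].
  rewrite !inE => /andP[ha hb] /andP[ha' hb'] ab.
  exact: (C4 a b y z ab yz ha ha' hb hb').
have S2 : \sum_x deg H x * deg H x <= n * n + m.
  under eq_bigr do rewrite sq.
  rewrite big_split /= leq_add2r exchange_big /=.
  apply: (@leq_trans (\sum_(y : V) \sum_(z : V) 1)); last first.
    by rewrite !sum_nat_const !card_ord muln1.
  apply: leq_sum => y _.
  rewrite exchange_big /=.
  apply: leq_sum => z _.
  case: (eqVneq y z) => [->|yz].
    by rewrite big1 // => x _; rewrite andbF.
  apply: leq_trans (cf y z yz); apply: leq_sum => x _.
  by rewrite andbT.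
have CS : m * m <= n * \sum_x deg H x * deg H x.
  rewrite -(@leq_pmul2l 2) //.
  have -> : 2 * (m * m) = \sum_(x : V) \sum_(y : V) 2 * (deg H x * deg H y).
    rewrite /m big_distrlr big_distrr /=; apply: eq_bigr => x _; by rewrite big_distrr.
  have -> : 2 * (n * \sum_x deg H x * deg H x) =
      \sum_(x : V) \sum_(y : V) (deg H x * deg H x + deg H y * deg H y).
    under [RHS]eq_bigr do rewrite big_split /= sum_nat_const card_ord.
    by rewrite big_split /= -big_distrr /= sum_nat_const card_ord mul2n -addnn.
  apply: leq_sum => x _; apply: leq_sum => y _.
  by have := (nat_Cauchy (deg H x) (deg H y)).1; rewrite !expnS !expn0 !muln1.
apply: (leq_trans CS); rewrite -[n * n * n]mulnA -mulnDr leq_mul2l S2 orbT //.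
Qed.


Lemma add_piece (H' D' : rel V) l : symr H' -> orientation H' D' -> eulerian D' ->
  uniq (l ++ swapl l) -> closedl l -> (forall e, e \in l ++ swapl l -> ~~ H' e.1 e.2) ->
  [/\ orientation (addarcs H' (l ++ swapl l)) (addarcs D' l), eulerian (addarcs D' l) &
     forall S T, e_rel (addarcs D' l) S T = e_rel D' S T + count (inST S T) l].
Proof.
move=> Hs O E ul cl nH.
have ul1 : uniq l by move: ul; rewrite cat_uniq => /andP[].
have nD : forall e, e \in l -> ~~ D' e.1 e.2.
  by move=> e h; apply: (orient_not O); apply: nH; rewrite mem_cat h.
split.
- exact: orient_add.
- exact: eulerian_add.
- by move=> S T; rewrite addarcs_erel.
Qed.

Lemma add_piece_sw (H' D' : rel V) l : symr H' -> orientation H' D' -> eulerian D' ->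
  uniq (l ++ swapl l) -> closedl l -> (forall e, e \in l ++ swapl l -> ~~ H' e.1 e.2) ->
  [/\ orientation (addarcs H' (l ++ swapl l)) (addarcs D' (swapl l)),
     eulerian (addarcs D' (swapl l)) &
     forall S T, e_rel (addarcs D' (swapl l)) S T = e_rel D' S T + count (inST S T) (swapl l)].
Proof.
move=> Hs O E ul cl nH.
have P : swapl l ++ swapl (swapl l) =i l ++ swapl l.
  by move=> e; rewrite swaplK !mem_cat orbC.
have u2 : uniq (swapl l ++ swapl (swapl l)) by rewrite swaplK uniq_catC.
have c2 : closedl (swapl l).
  move=> x; rewrite (count_swapl (fun z => z == x)).
  have := count_swapl (fun z => z == x) (swapl l); rewrite swaplK => <-.
  by rewrite cl.
have n2 : forall e, e \in swapl l ++ swapl (swapl l) -> ~~ H' e.1 e.2.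
  by move=> e0; rewrite P; apply: nH.
have [o' e' r'] := add_piece Hs O E u2 c2 n2.
split => //; apply: orient_eq o' => x y; exact: addarcs_perm.
Qed.


Definition cycq (q : V * V * V * V) : seq (V * V) :=
  [:: (q.1.1.1, q.1.1.2); (q.1.1.2, q.1.2); (q.1.2, q.2); (q.2, q.1.1.1)].
Definition orientq q (b : bool) := if b then cycq q else swapl (cycq q).

Fixpoint Dof (Lo : rel V) (qs : seq (V * V * V * V)) (bs : seq bool) : rel V :=
  if qs is q :: qs' then addarcs (Dof Lo qs' (behead bs)) (orientq q (head false bs))
  else Lo.

Fixpoint Yof S T (qs : seq (V * V * V * V)) (bs : seq bool) : nat :=
  if qs is q :: qs' then count (inST S T) (orientq q (head false bs)) + Yof S T qs' (behead bs)
  else 0.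

Definition Mof S T (qs : seq (V * V * V * V)) : nat :=
  \sum_(q <- qs) count (inST S T) (cycq q ++ swapl (cycq q)).

Lemma decompose_base (H : rel V) : symr H -> irrr H -> evenr H ->
  ~~ [exists a, exists b, exists x, exists y,
      [&& a != b, x != y, H a x, H b x, H a y & H b y]] ->
  exists qs Lo mL, [/\ (mL * mL <= n * n * n + n * mL)%N,
    forall S T, e_rel H S T <= mL + Mof S T qs &
    forall bs, [/\ orientation H (Dof Lo qs bs), eulerian (Dof Lo qs bs) &
      forall S T, Yof S T qs bs <= e_rel (Dof Lo qs bs) S T]].
Proof.
move=> Hs Hi He NC.
have [Lo [OL EL]] := euler_exists (leqnn _) Hs Hi He.
exists [::], Lo, (e_rel H setT setT); split.
+ apply: kst => // a b x y ab xy h1 h2 h3 h4; move/negP: NC; apply.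
  by apply/existsP; exists a; apply/existsP; exists b; apply/existsP; exists x;
    apply/existsP; exists y; rewrite ab xy h1 h2 h3 h4.
+ move=> S T; rewrite /Mof big_nil addn0; apply: subset_leq_card.
  by apply/subsetP => xy; rewrite !inE => /andP[_ ->]; rewrite andbT.
+ by move=> bs; split => // S T.
Qed.

Lemma decompose k : forall H : rel V, e_rel H setT setT <= k -> symr H -> irrr H -> evenr H ->
  exists qs Lo mL, [/\ (mL * mL <= n * n * n + n * mL)%N,
    forall S T, e_rel H S T <= mL + Mof S T qs &
    forall bs, [/\ orientation H (Dof Lo qs bs), eulerian (Dof Lo qs bs) &
      forall S T, Yof S T qs bs <= e_rel (Dof Lo qs bs) S T]].
Proof.
elim: k => [|k IH] H hk Hs Hi He;
  (case: (boolP [exists a, exists b, exists x, exists y,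
      [&& a != b, x != y, H a x, H b x, H a y & H b y]]) => [C|NC];
   last by apply: decompose_base).
  exfalso; case/existsP: C => a /existsP[b /existsP[x /existsP[y]]].
  case/and5P=> ab xy h1 h2 /andP[h3 h4].
  move: hk; rewrite leqn0 => /eqP/cards0_eq/setP/(_ (a, x)).
  by rewrite !inE h1.
case/existsP: C => a /existsP[b /existsP[x /existsP[y]]].
case/and5P=> ab xy h1 h2 /andP[h3 h4].
have ne : forall u v, H u v -> u != v.
  by move=> u v h; apply: contraNneq (Hi u) => e; rewrite {2}e.
have ax := ne _ _ h1; have bx := ne _ _ h2; have ay := ne _ _ h3; have by' := ne _ _ h4.
have ab' := negbTE ab; have ba' : (b == a) = false by rewrite eq_sym ab'.
have xy' := negbTE xy; have yx' : (y == x) = false by rewrite eq_sym xy'.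
have ax' := negbTE ax; have xa' : (x == a) = false by rewrite eq_sym ax'.
have bx' := negbTE bx; have xb' : (x == b) = false by rewrite eq_sym bx'.
have ay' := negbTE ay; have ya' : (y == a) = false by rewrite eq_sym ay'.
have by'' := negbTE by'; have yb' : (y == b) = false by rewrite eq_sym by''.
pose q := (a, x, b, y).
pose l := cycq q.
have ul : uniq (l ++ swapl l).
  by rewrite /l /cycq /= !inE !xpair_eqE ab' ba' xy' yx' ax' xa' bx' xb' ay' ya' by'' yb' /= ?andbF.
have cl : closedl l.
  apply: perm_closed; rewrite perm_sym; change (perm_eq (rot 1 [:: a; x; b; y]) [:: a; x; b; y]).
  by rewrite perm_rot.
have Hl : forall e, e \in l -> H e.1 e.2.
  by move=> e; rewrite !inE => /or4P[] /eqP->; rewrite /= // Hs.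
have [s' i' e' E r] := split_off Hs Hi He ul cl Hl.
set H' := (fun x y => _) in s' i' e' E r.
have [qs [Lo [mL [B1 B2 B3]]]] : exists qs Lo mL, [/\ (mL * mL <= n * n * n + n * mL)%N,
    forall S T, e_rel H' S T <= mL + Mof S T qs &
    forall bs, [/\ orientation H' (Dof Lo qs bs), eulerian (Dof Lo qs bs) &
      forall S T, Yof S T qs bs <= e_rel (Dof Lo qs bs) S T]].
  apply: IH => //; move: hk; rewrite r /inST /= !inE /=; set m := e_rel _ _ _.
  move=> h; clear -h; lia.
exists (q :: qs), Lo, mL; split => //.
  move=> S T; rewrite r /Mof big_cons -/(Mof S T qs) [X in _ <= X]addnCA [X in X <= _]addnC leq_add2l; exact: B2.
move=> bs; have [O1 E1 Y1] := B3 (behead bs).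
have nH : forall e, e \in l ++ swapl l -> ~~ H' e.1 e.2.
  by move=> [u v] /= h; rewrite /H' h andbF.
rewrite /=; case: (head false bs); rewrite /orientq.
  have [o e0 r0] := add_piece s' O1 E1 ul cl nH.
  split => //; first exact: orient_eq E o.
  by move=> S T; rewrite r0 [X in _ <= X]addnC leq_add2l.
have [o e0 r0] := add_piece_sw s' O1 E1 ul cl nH.
split => //; first exact: orient_eq E o.
by move=> S T; rewrite r0 [X in _ <= X]addnC leq_add2l.
Qed.

End Arcs.

Fixpoint allb k : seq (seq bool) :=
  if k is k'.+1 then [seq true :: l | l <- allb k'] ++ [seq false :: l | l <- allb k']
  else [:: [::]].

Lemma size_allb k : size (allb k) = (2 ^ k)%N.
Proof. by elim: k => //= k IH; rewrite size_cat !size_map IH expnS mul2n addnn. Qed.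

Section Count.
Variable R : realType.
Variable T : Type.
Variable f : T -> bool -> nat.
Local Open Scope ring_scope.

Fixpoint Yg (qs : seq T) (bs : seq bool) : nat :=
  if qs is q :: qs' then (f q (head false bs) + Yg qs' (behead bs))%N else 0%N.
Definition Mg (qs : seq T) : nat := (\sum_(q <- qs) (f q true + f q false))%N.

Local Notation sig := (9/10 : R).
Local Notation rho := (49/50 : R).

Lemma num1 (a b : nat) : (a <= 4)%N -> (b <= 4)%N ->
  sig ^+ (4 * a) + sig ^+ (4 * b) <= 2 * (rho * sig) ^+ (a + b).
Proof.
move=> ha hb.
do 5?[case: a ha => [|a] ha //]; do 5?[case: b hb => [|b] hb //];
  rewrite /= ?expr0 ?exprS ?expr0 ?mulr1; lra.
Qed.

Lemma Wbound (qs : seq T) : (forall q b, (f q b <= 4)%N) ->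
  \sum_(bs <- allb (size qs)) sig ^+ (4 * Yg qs bs) <= 2 ^+ size qs * (rho * sig) ^+ (Mg qs).
Proof.
move=> hf; elim: qs => [|q qs IH] /=.
  by rewrite big_cons big_nil /Mg big_nil !expr0 addr0 mulr1.
rewrite big_cat !big_map /=.
under eq_bigr do rewrite mulnDr exprD.
under [X in _ + X <= _]eq_bigr do rewrite mulnDr exprD.
rewrite -!big_distrr /= -mulrDl /Mg big_cons -/(Mg qs) exprD exprS.
set W := \sum_(_ <- _) _.
set A := _ + _.
have A0 : 0 <= A by apply: addr_ge0; apply: exprn_ge0; lra.
apply: le_trans (ler_wpM2l A0 IH) _.
set P := 2 ^+ size qs * _.
have P0 : 0 <= P by apply: mulr_ge0; apply: exprn_ge0; lra.
have -> : 2 * 2 ^+ size qs * ((rho * sig) ^+ (f q true + f q false) * (rho * sig) ^+ Mg qs)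
    = (2 * (rho * sig) ^+ (f q true + f q false)) * P by rewrite /P; ring.
by apply: ler_wpM2r => //; apply: num1.
Qed.

Lemma count_bad (qs : seq T) : (forall q b, (f q b <= 4)%N) ->
  ((count (fun bs => 4 * Yg qs bs < Mg qs)%N (allb (size qs)))%:R : R)
    <= 2 ^+ size qs * rho ^+ (Mg qs).
Proof.
move=> hf.
have s0 : 0 < sig by lra.
have -> : 2 ^+ size qs * rho ^+ (Mg qs) = sig ^- (Mg qs) * (2 ^+ size qs * (rho * sig) ^+ (Mg qs)).
  have : sig ^+ Mg qs != 0 by apply: expf_neq0; lra.
  rewrite (exprMn _ rho sig); set a := sig ^+ Mg qs; set b := rho ^+ Mg qs; set c := 2 ^+ size qs.
  by move=> h; rewrite (mulrC b a) mulrCA mulKf.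
have i0 : 0 <= sig ^- Mg qs by rewrite invr_ge0; apply: exprn_ge0; lra.
apply: le_trans; last exact: (ler_wpM2l i0 (Wbound qs hf)).
rewrite -sum1_count natr_sum big_distrr /= big_mkcond /=.
apply: ler_sum => bs _; case: ifP => h; last first.
  by apply: mulr_ge0; [rewrite invr_ge0|]; apply: exprn_ge0; lra.
rewrite ler_pdivlMl; last by apply: exprn_gt0.
rewrite mulr1; apply: ler_wiXn2l; [lra|lra|exact: ltnW].
Qed.

End Count.

Lemma count_exists (I : finType) (A : Type) (P : I -> A -> bool) (s : seq A) :
  (count (fun x => [exists i, P i x]) s <= \sum_i count (P i) s)%N.
Proof.
elim: s => [|x s IH] /=; first by rewrite big1.
rewrite big_split /= leq_add //.
case: existsP => [[i Pi]|] //.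
by rewrite (bigD1 i) //= Pi.
Qed.

Lemma Yof_Yg n S T qs bs : @Yof n S T qs bs =
  Yg (fun q b => count (inST S T) (orientq q b)) qs bs.
Proof. by elim: qs bs => //= q qs IH bs; rewrite IH. Qed.

Lemma Mof_Mg n S T qs : @Mof n S T qs =
  Mg (fun q b => count (inST S T) (orientq q b)) qs.
Proof. by apply: eq_bigr => q _; rewrite count_cat. Qed.

Lemma f_le4 n S T q b : (count (@inST n S T) (orientq q b) <= 4)%N.
Proof.
apply: leq_trans (count_size _ _) _.
by case: b; rewrite /orientq //= size_map.
Qed.

Local Open Scope ring_scope.

Lemma mL_bound (R : realType) (n mL : nat) (d : R) : 0 < d <= 1 ->
  2 < d * d * n%:R -> (mL * mL <= n * n * n + n * mL)%N -> mL%:R <= d * n%:R ^+ 2.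
Proof.
move=> /andP[d0 d1] hn hm.
have := hm; rewrite -(ler_nat R) !natrD !natrM => h.
set m := mL%:R in h *; set N := n%:R in h hn *.
have N0 : 0 < N by nra.
have m0 : 0 <= m by rewrite /m ler0n.
rewrite leNgt; apply/negP => hlt.
have dN : 2 < d * N by nra.
have m2N : 2 * N < m by nra.
have h3 : m * m <= 2 * (N * N * N) by nra.
have dN2 : 0 <= d * N ^+ 2 by apply: mulr_ge0; [lra| apply: exprn_ge0; lra].
have h4 : (d * N ^+ 2) * (d * N ^+ 2) < m * m.
  by apply: ltr_pM => //.
have h5 : 2 * (N * N * N) < (d * N ^+ 2) * (d * N ^+ 2).
  have -> : (d * N ^+ 2) * (d * N ^+ 2) = (d * d * N) * (N * N * N) by rewrite expr2; ring.
  rewrite ltr_pM2r //; apply: mulr_gt0 => //; exact: mulr_gt0.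
lra.
Qed.

Unset Implicit Arguments.

Theorem lemma3p11 (R : realType) (p alpha : R) :
  0 < p < 1 -> 0 < alpha < 1 ->
  exists eps0 : R, 0 < eps0 /\
  forall eps : R, 0 < eps -> eps <= eps0 ->
  exists n0 : nat, forall (n : nat) (G : rel 'I_n),
    (n0 <= n)%N ->
    simple_graph G ->
    (forall v, ~~ odd (deg G v)) ->
    lower_regular G p eps ->
    (forall v, alpha * n%:R <= (deg G v)%:R) ->
    exists D : rel 'I_n,
      orientation G D /\ eulerian D /\ lower_regular D (p / 4) eps.
Proof.
move=> /andP[p0 p1] _.
exists (p / 8); split; first lra.
move=> eps e0 ee.
pose d := 3 * eps ^+ 3.
have d0 : 0 < d by rewrite /d; apply: mulr_gt0; [lra| exact: exprn_gt0].
have d1 : d <= 1.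
  rewrite /d; have : eps ^+ 3 <= 1 by apply: exprn_ile1; lra.
  have : eps ^+ 3 <= eps by rewrite -[X in _ <= X]expr1; apply: ler_wiXn2l => //; lra.
  lra.
pose x0 := 2 / (d * d) + 300 / (p * (eps * eps)).
exists (Num.truncn x0).+1 => n G hn [Gs Gi] Ge Greg _.
have nx : x0 < n%:R.
  apply: lt_le_trans (truncnS_gt x0) _; by rewrite ler_nat.
rewrite /x0 in nx.
have dd0 : 0 < d * d by apply: mulr_gt0.
have pe0 : 0 < p * (eps * eps) by apply: mulr_gt0 => //; apply: mulr_gt0.
have q1 : 0 <= 2 / (d * d) by apply: divr_ge0; lra.
have q2 : 0 <= 300 / (p * (eps * eps)) by apply: divr_ge0; lra.
have hd1 : 2 < d * d * n%:R.
  have h : 2 / (d * d) < n%:R by lra.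
  by rewrite -(ltr_pM2r dd0) divfK ?gt_eqF // in h; rewrite mulrC.
have hp1 : 300 < p * (eps * eps) * n%:R.
  have h : 300 / (p * (eps * eps)) < n%:R by lra.
  by rewrite -(ltr_pM2r pe0) divfK ?gt_eqF // in h; rewrite mulrC.
have [qs [Lo [mL [B1 B2 B3]]]] := decompose (leqnn _) Gs Gi Ge.
have mLb : mL%:R <= d * n%:R ^+ 2 by apply: mL_bound => //; rewrite d0 d1.
have n0 : (0 < n)%N.
  by rewrite -(ltr_nat R); apply: le_lt_trans nx; apply: addr_ge0.
have n1 : 1 <= n%:R :> R by rewrite ler1n.
pose qual (ST : {set 'I_n} * {set 'I_n}) :=
  [&& [disjoint ST.1 & ST.2], eps * n%:R <= #|ST.1|%:R & eps * n%:R <= #|ST.2|%:R].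
pose B (ST : {set 'I_n} * {set 'I_n}) bs :=
  (4 * Yof ST.1 ST.2 qs bs < Mof ST.1 ST.2 qs)%N.
have KM : forall S T, qual (S, T) ->
    (p - 4 * eps) * (#|S|%:R * #|T|%:R) <= (Mof S T qs)%:R.
  move=> S T /and3P[dST hS hT].
  have hG := Greg S T dST hS hT.
  have h2 := B2 S T; rewrite -(ler_nat R) natrD in h2.
  have en0 : 0 <= eps * n%:R by apply: mulr_ge0; lra.
  have hST : (eps * n%:R) ^+ 2 <= #|S|%:R * #|T|%:R by rewrite expr2; apply: ler_pM.
  have hdn : d * n%:R ^+ 2 = 3 * eps * (eps * n%:R) ^+ 2 by rewrite /d; ring.
  rewrite -mulrA in hG.
  move: hST hdn hG h2 mLb; set st := _ * _; set en := (eps * _) ^+ 2; move=> *.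
  nra.
have KK : forall S T, qual (S, T) -> (50 * (2 * n + 1) <= Mof S T qs)%N.
  move=> S T hq; have hM := KM S T hq.
  case/and3P: hq => _ hS hT.
  have en0 : 0 <= eps * n%:R by apply: mulr_ge0; lra.
  have hST : (eps * n%:R) ^+ 2 <= #|S|%:R * #|T|%:R by rewrite expr2; apply: ler_pM.
  rewrite -(ler_nat R) natrM natrD natrM.
  have e1 : (eps * n%:R) ^+ 2 * p = (p * (eps * eps) * n%:R) * n%:R by ring.
  have st0 : 0 <= #|S|%:R * #|T|%:R :> R by apply: mulr_ge0; apply: ler0n.
  have h1 : (p / 2) * (#|S|%:R * #|T|%:R) <= (Mof S T qs)%:R.
    apply: le_trans hM; apply: ler_wpM2r => //; lra.
  have h2 : (p / 2) * (eps * n%:R) ^+ 2 <= (p / 2) * (#|S|%:R * #|T|%:R).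
    by apply: ler_wpM2l => //; lra.
  have h3 : 150 * n%:R <= (p / 2) * (eps * n%:R) ^+ 2.
    have -> : (p / 2) * (eps * n%:R) ^+ 2 = (p * (eps * eps) * n%:R) / 2 * n%:R.
      by rewrite [_ * p]mulrC in e1; rewrite mulrAC e1; field.
    by apply: ler_wpM2r; lra.
  lra.
pose k := size qs.
pose bad bs := [exists ST, qual ST && B ST bs].
have r50 : (49/50 : R) ^+ 50 <= 1/2.
  have h10 : (49/50 : R) ^+ 10 <= 41/50 by rewrite !exprS expr0; lra.
  rewrite (_ : 50 = 10 * 5)%N // exprM.
  apply: le_trans (_ : (41/50 : R) ^+ 5 <= 1/2); last by rewrite !exprS expr0; lra.
  apply: lerXn2r => //; rewrite nnegrE ?exprn_ge0 //; lra.
have CB : (count bad (allb k))%:R < (2 ^ k)%:R :> R.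
  apply: (@le_lt_trans _ _ (\sum_(ST : {set 'I_n} * {set 'I_n})
       (count (fun bs => qual ST && B ST bs) (allb k))%:R)).
    rewrite -natr_sum ler_nat; exact: count_exists.
  apply: (@le_lt_trans _ _ (\sum_(ST : {set 'I_n} * {set 'I_n})
       (2 ^+ k * (1/2) ^+ (2 * n + 1)))).
    apply: ler_sum => [[S T]] _.
    case hq: (qual (S, T)); last first.
      rewrite (eq_count (a2 := pred0)) ?count_pred0 //.
      by apply: mulr_ge0; apply: exprn_ge0; lra.
    have := count_bad R (f := fun q b => count (inST S T) (orientq q b)) qs
              (fun q b => f_le4 S T q b).
    rewrite -/k (@eq_count _ _ (fun bs => true && B (S, T) bs)); last first.
      by move=> bs; rewrite /B /= Yof_Yg Mof_Mg.
    move=> h; apply: le_trans h _; apply: ler_wpM2l; first by apply: exprn_ge0.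
    apply: le_trans (_ : (49/50 : R) ^+ (50 * (2 * n + 1)) <= _).
      rewrite -Mof_Mg; apply: ler_wiXn2l; [lra|lra|exact: KK].
    rewrite exprM; apply: lerXn2r => //; rewrite nnegrE ?exprn_ge0 //; lra.
  rewrite sumr_const card_prod -cardsT -powersetT card_powerset cardsT card_ord.
  rewrite -(mulr_natr (2 ^+ k * (1/2) ^+ (2 * n + 1)) (2 ^ n * 2 ^ n)) natrM !natrX -mulrA.
  have -> : (1 / 2 : R) ^+ (2 * n + 1) * (2 ^+ n * 2 ^+ n) = 1 / 2.
    rewrite -exprD addnn -mul2n addn1 exprS -mulrA -exprMn.
    by rewrite (_ : (1 / 2 : R) * 2 = 1) ?expr1n ?mulr1 //; field.
  have : 0 < (2 : R) ^+ k by apply: exprn_gt0.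
  lra.
have [bs _ nb] : exists2 bs, bs \in allb k & ~~ bad bs.
  apply/hasP; rewrite has_count; have := count_predC bad (allb k); rewrite size_allb.
  move: CB; rewrite ltr_nat => CB h.
  by rewrite -(ltn_add2l (count bad (allb k))) addn0 h.
have [OD ED YD] := B3 bs.
exists (Dof Lo qs bs); split => //; split => //.
move=> S T dST hS hT.
have hq : qual (S, T) by rewrite /qual /= dST hS hT.
have nB : ~~ B (S, T) bs.
  by apply: contra nb => hB; apply/existsP; exists (S, T); rewrite hq hB.
have hM := KM S T hq.
have hY := YD S T.
rewrite /B /= -leqNgt in nB.
have : (Mof S T qs)%:R <= 4 * (e_rel (Dof Lo qs bs) S T)%:R :> R.
  rewrite -natrM ler_nat; apply: leq_trans nB _; by rewrite leq_mul2l hY orbT.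
move=> h; rewrite -mulrA.
have -> : (p / 4 - eps) * (#|S|%:R * #|T|%:R) =
  ((p - 4 * eps) * (#|S|%:R * #|T|%:R)) / 4 by field.
lra.
Qed.
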